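(* Let $\mathbf A$ be a Mal'cev algebra, $n\ge1$, and $\alpha_0,\dots,\alpha_{n-1}$ congruences of $\mathbf A$. Then $\psi_i(\Delta(\alpha_0,\dots,\alpha_{n-1}))=\psi_j(\Delta(\alpha_0,\dots,\alpha_{n-1}))$ for all $i,j<2^n$.
   Context: A Mal'cev algebra is an algebra with a ternary term operation $q$ satisfying $q(x,x,y)=y=q(y,x,x)$. Tuples in $A^m$ are indexed by $0,\dots,m-1$; $k_{(i)}$ is the $i$-th binary digit of $k$ (least significant is $i=0$). For $a,b\in A$ and $i<n$, $\mathbf c_i^n(a,b)\in A^{2^n}$ has $k$-th coordinate $a$ if $k_{(i)}=0$ and $b$ if $k_{(i)}=1$. $\Delta(\alpha_0,\dots,\alpha_{n-1})$ is the subuniverse of $\mathbf A^{2^n}$ generated by $\{\mathbf c_i^n(a,b): i<n,\ (a,b)\in\alpha_i\}$. Forks: for $R\subseteq A^m$ and $i<m$, $\psi_i(R)$ is the set of pairs $(a,b)$ for which there exist $\mathbf c,\mathbf d\in R$ with $c_i=a$, $d_i=b$, and $c_k=d_k$ for all $k\neq i$. *)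

(* Defs.v *)
From mathcomp Require Import all_boot.
Set Implicit Arguments. Unset Strict Implicit. Unset Printing Implicit Defensive.

Record algebra := Algebra {
  carrier :> Type;
  Op : Type;
  arity : Op -> nat;
  op : forall o : Op, ('I_(arity o) -> carrier) -> carrier
}.

Inductive term (A : algebra) (X : Type) : Type :=
  | Var : X -> term A X
  | App : forall o : Op A, ('I_(arity o) -> term A X) -> term A X.

Fixpoint eval_term (A : algebra) (X : Type) (env : X -> A) (t : term A X) : A :=
  match t with
  | Var x => env x
  | App o ts => op (fun k => eval_term env (ts k))
  end.

Definition env3 (A : algebra) (x y z : A) (k : 'I_3) : A :=
  match val k with 0 => x | 1 => y | _ => z end.

Definition malcev (A : algebra) : Prop :=
  exists q : term A 'I_3,
    forall x y : A, eval_term (env3 x x y) q = y /\ eval_term (env3 y x x) q = y.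

Definition congruence (A : algebra) (R : A -> A -> Prop) : Prop :=
  [/\ (forall x, R x x),
      (forall x y, R x y -> R y x),
      (forall x y z, R x y -> R y z -> R x z) &
      (forall (o : Op A) (a b : 'I_(arity o) -> A),
          (forall k, R (a k) (b k)) -> R (op a) (op b))].

Definition subuniverse_pow (A : algebra) (m : nat) (S : ('I_m -> A) -> Prop) : Prop :=
  forall (o : Op A) (v : 'I_(arity o) -> 'I_m -> A),
    (forall k, S (v k)) -> S (fun j => op (fun k => v k j)).

Definition Sg_pow (A : algebra) (m : nat) (G : ('I_m -> A) -> Prop)
  : ('I_m -> A) -> Prop :=
  fun x => forall S, subuniverse_pow S -> (forall y, G y -> S y) -> S x.

(* i-th binary digit of k (least significant is i = 0) *)
Definition bit (i k : nat) : bool := odd (k %/ 2 ^ i).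

Definition cvec (A : algebra) (n i : nat) (a b : A) : 'I_(2 ^ n) -> A :=
  fun k => if bit i k then b else a.

Definition Delta (A : algebra) (n : nat) (alpha : 'I_n -> A -> A -> Prop)
  : ('I_(2 ^ n) -> A) -> Prop :=
  Sg_pow (fun x => exists (i : 'I_n) (a b : A), alpha i a b /\ x = @cvec A n i a b).

Definition fork (A : algebra) (m : nat) (R : ('I_m -> A) -> Prop) (i : 'I_m)
  (a b : A) : Prop :=
  exists c d : 'I_m -> A,
    [/\ R c, R d, c i = a, d i = b & forall k, k != i -> c k = d k].

(* Main.v *)
Require Import Defs.
From Stdlib Require Import PeanoNat FunctionalExtensionality.
From mathcomp Require Import all_boot.

Lemma oddNat n : odd n = Nat.odd n.
Proof.
elim: n => [//|n IH]; by rewrite Nat.odd_succ -Nat.negb_odd -IH /=.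
Qed.

Lemma expNat l : 2 ^ l = Nat.pow 2 l.
Proof. elim: l => [//|l IH]; by rewrite expnS IH /= -multE. Qed.

Lemma divNat k d : 0 < d -> k %/ d = Nat.div k d.
Proof.
move=> d0; apply: (Nat.div_unique k d (k %/ d) (k %% d)).
  by apply/ltP; rewrite ltn_mod.
by rewrite {1}(divn_eq k d) mulnC multE plusE.
Qed.

Lemma bitNat l k : bit l k = Nat.testbit k l.
Proof.
rewrite /bit Nat.testbit_odd Nat.shiftr_div_pow2 oddNat -expNat divNat //.
by rewrite expn_gt0.
Qed.

Lemma lxor_lt n k m : k < 2 ^ n -> m < 2 ^ n -> Nat.lxor k m < 2 ^ n.
Proof.
rewrite !expNat => /ltP hk /ltP hm; apply/ltP.
case: (Nat.eq_dec (Nat.lxor k m) 0) => [->|hz].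
  exact (Nat.le_lt_trans _ _ _ (Nat.le_0_l k) hk).
have pos : forall x, x <> 0 -> (0 < x)%coq_nat.
  move=> x hx; apply/ltP; rewrite lt0n; apply/eqP => //.
apply/Nat.log2_lt_pow2; first exact: pos.
case: (Nat.eq_dec k 0) => [e|hk0].
  move: hz; rewrite e Nat.lxor_0_l => hz; apply/Nat.log2_lt_pow2; [exact: pos|done].
case: (Nat.eq_dec m 0) => [e|hm0].
  move: hz; rewrite e Nat.lxor_0_r => hz; apply/Nat.log2_lt_pow2; [exact: pos|done].
have h1 : (Nat.log2 k < n)%coq_nat by apply/Nat.log2_lt_pow2; [exact: pos|done].
have h2 : (Nat.log2 m < n)%coq_nat by apply/Nat.log2_lt_pow2; [exact: pos|done].
apply: Nat.le_lt_trans (Nat.log2_lxor k m) _; exact: Nat.max_lub_lt.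
Qed.

Section S.
Variables (A : algebra) (n : nat) (alpha : 'I_n -> A -> A -> Prop).

Lemma Delta_perm (s : 'I_(2 ^ n) -> 'I_(2 ^ n)) :
  (forall (i : 'I_n) a b, alpha i a b ->
     exists (i' : 'I_n) (a' b' : A), alpha i' a' b' /\
        (fun k => @cvec A n i a b (s k)) = @cvec A n i' a' b') ->
  forall x, Delta alpha x -> Delta alpha (fun k => x (s k)).
Proof.
move=> hG x hx S hS hGS.
apply: (hx (fun y => S (fun k => y (s k)))).
  move=> o v hv; exact: (hS o (fun k j => v k (s j))).
move=> y [i [a [b [hab ->]]]]; apply: hGS; exact: hG.
Qed.

Lemma fork_perm (s : 'I_(2 ^ n) -> 'I_(2 ^ n)) :
  (forall k, s (s k) = k) ->
  (forall x, Delta alpha x -> Delta alpha (fun k => x (s k))) ->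
  forall i a b, fork (Delta alpha) i a b -> fork (Delta alpha) (s i) a b.
Proof.
move=> inv hD i a b [c [d [hc hd ca db hcd]]].
exists (fun k => c (s k)), (fun k => d (s k)); split; try by apply: hD.
- by rewrite inv.
- by rewrite inv.
move=> k hk; apply: hcd; apply/eqP => e; move/eqP: hk; apply; by rewrite -e inv.
Qed.
End S.

Theorem mainTheorem6 (A : algebra) (n : nat) (alpha : 'I_n -> A -> A -> Prop) :
  malcev A -> 1 <= n -> (forall i, congruence (alpha i)) ->
  forall i j : 'I_(2 ^ n), forall a b : A,
    fork (Delta alpha) i a b <-> fork (Delta alpha) j a b.
Proof.
move=> _ _ hcong i j a b.
pose m := Nat.lxor i j.
have mlt : m < 2 ^ n by apply: lxor_lt; apply: ltn_ord.
pose s (k : 'I_(2 ^ n)) : 'I_(2 ^ n) := Ordinal (@lxor_lt n k m (ltn_ord k) mlt).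
have inv : forall k, s (s k) = k.
  move=> k; apply: val_inj => /=.
  by rewrite Nat.lxor_assoc Nat.lxor_nilpotent Nat.lxor_0_r.
have hD : forall x, Delta alpha x -> Delta alpha (fun k => x (s k)).
  apply: Delta_perm => l a' b' hab.
  case hm: (bit l m).
  - exists l, b', a'; split; first by case: (hcong l) => _ hsym _ _; apply: hsym.
    apply: functional_extensionality => k; rewrite /cvec /=.
    move: hm; rewrite !bitNat Nat.lxor_spec => ->.
    by case: (Nat.testbit k l).
  - exists l, a', b'; split => //.
    apply: functional_extensionality => k; rewrite /cvec /=.
    move: hm; rewrite !bitNat Nat.lxor_spec => ->.
    by case: (Nat.testbit k l).
have si : s i = j.
  apply: val_inj => /=; by rewrite /m -Nat.lxor_assoc Nat.lxor_nilpotent Nat.lxor_0_l.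
have sj : s j = i by rewrite -si inv.
split => h.
- rewrite -si; exact: fork_perm.
- rewrite -sj; exact: fork_perm.
Qed.
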